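(* Let $g:\mathbb{C}\to\mathbb{C}$ be holomorphic at $0$ with $g(0)=0$ and $g'(0)\neq 0$, and let $\varphi:\mathbb{N}\to\mathbb{C}\setminus\{0\}$. Let $(P_n(x))_{n\ge 0}$ be a sequence of Appell polynomials of type $(g,\varphi)$ with generating function $f$, i.e. $f$ is holomorphic at $0$, $f(0)\neq 0$, and $$\sum_{n\ge 0}P_n(x)\frac{t^n}{\varphi(0)\varphi(1)\cdots\varphi(n)}=f(t)e^{x g(t)}$$ for all $x$ and all $t$ near $0$. Then $P_n(-x)=(-1)^nP_n(x)$ for all $n\ge0$ and all $x$ if and only if $g$ is odd and $f$ is even.
   Context: Here $\mathbb{N}=\{0,1,2,\dots\}$. A sequence of Appell polynomials of type $(g,\varphi)$ is a sequence of polynomials for which some $f$ holomorphic at $0$ with $f(0)\ne0$ satisfies the displayed identity. *)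

(* Defs.v *)
From Stdlib Require Import Reals.
From Coquelicot Require Export Coquelicot.
Open Scope R_scope.

Definition cpow (z : C) (n : nat) : C := @pow_n C_Ring z n.

Definition has_cderiv (f : C -> C) (z : C) (l : C) : Prop :=
  @is_derive C_AbsRing C_NormedModule f z l.

Definition holomorphic_at0 (f : C -> C) : Prop :=
  exists r : R, 0 < r /\ forall z : C, Cmod z < r -> exists l : C, has_cderiv f z l.

Definition cexp (z : C) : C :=
  (exp (fst z) * cos (snd z), exp (fst z) * sin (snd z)).

Fixpoint phiprod (phi : nat -> C) (n : nat) : C :=
  match n with
  | O => phi O
  | S m => Cmult (phiprod phi m) (phi (S m))
  end.

Definition is_poly_fun (p : C -> C) : Prop :=
  exists (d : nat) (a : nat -> C), forall x : C,
    p x = @sum_n C_AbelianMonoid (fun k => Cmult (a k) (cpow x k)) d.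

Definition appell_gen (g : C -> C) (phi : nat -> C) (f : C -> C) (P : nat -> C -> C) : Prop :=
  holomorphic_at0 f /\ f (RtoC 0) <> RtoC 0 /\
  (forall n, is_poly_fun (P n)) /\
  forall x : C, exists r : R, 0 < r /\ forall t : C, Cmod t < r ->
    @is_series C_AbsRing C_NormedModule
      (fun n => Cdiv (Cmult (P n x) (cpow t n)) (phiprod phi n))
      (Cmult (f t) (cexp (Cmult x (g t)))).

(* oddness / evenness as germs at 0 (g, f are only relevant near 0) *)
Definition odd_near0 (g : C -> C) : Prop :=
  exists r : R, 0 < r /\ forall z : C, Cmod z < r -> g (Copp z) = Copp (g z).
Definition even_near0 (f : C -> C) : Prop :=
  exists r : R, 0 < r /\ forall z : C, Cmod z < r -> f (Copp z) = f z.

(* Main.v *)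
Require Import Defs.
From Stdlib Require Import Reals Lra Lia.
From Coquelicot Require Import Coquelicot.

Lemma ps_zero (a : nat -> R) (r : R) : 0 < r ->
  (forall t, Rabs t < r -> is_series (fun n => a n * t^n) 0) -> forall n, a n = 0.
Proof.
  intros Hr H n.
  set (x := r/2). set (y := x/2).
  assert (Hx : is_series (fun n => a n * x^n) 0).
  { apply H. unfold x. rewrite Rabs_pos_eq; lra. }
  assert (Hl : is_lim_seq (fun n => a n * x^n) 0).
  { apply ex_series_lim_0. eexists; exact Hx. }
  apply is_lim_seq_spec in Hl.
  destruct (Hl (mkposreal 1 Rlt_0_1)) as [N HN]. simpl in HN.
  assert (Hd : CV_disk a y).
  { unfold CV_disk. apply (proj2 (ex_series_incr_n _ N)).
    apply (@ex_series_le R_AbsRing R_CompleteNormedModule _ (fun k => (/2)^(N+k))).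
    - intros k. unfold norm; simpl. unfold abs; simpl. rewrite Rabs_Rabsolu.
      assert (Hy : y ^ (N+k) = x^(N+k) * (/2)^(N+k)).
      { unfold y. rewrite <- Rpow_mult_distr. f_equal. }
      rewrite Hy. rewrite <- Rmult_assoc, Rabs_mult.
      rewrite (Rabs_pos_eq ((/2)^(N+k))) by (apply pow_le; lra).
      rewrite <- (Rmult_1_l ((/2)^(N+k))) at 2.
      apply Rmult_le_compat_r. apply pow_le; lra.
      specialize (HN (N+k)%nat ltac:(lia)). rewrite Rminus_0_r in HN. lra.
    - apply (proj1 (ex_series_incr_n (fun k => (/2)^k) N)).
      eexists. apply is_series_geom. rewrite Rabs_pos_eq; lra. }
  assert (Hrad : Rbar_lt 0 (CV_radius a)).
  { apply Rbar_lt_le_trans with (Finite y).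
    simpl. unfold y, x. lra.
    apply (proj1 (Lub_Rbar_correct (CV_disk a))). exact Hd. }
  pose proof (Derive_n_coef a n Hrad) as Hc.
  rewrite (Derive_n_ext_loc _ (fun _ => 0)) in Hc.
  - assert (Hz : Derive_n (fun _ : R => 0) n 0 = 0).
    { destruct n. reflexivity. apply Derive_n_const. }
    simpl in Hc; rewrite Hz in Hc.
    pose proof (INR_fact_neq_0 n).
    symmetry in Hc. apply Rmult_integral in Hc. destruct Hc; [auto| contradiction].
  - exists (mkposreal r Hr). intros t Ht.
    apply is_pseries_unique. apply is_pseries_R. apply H.
    unfold ball in Ht; simpl in Ht. unfold AbsRing_ball, abs, minus, plus, opp in Ht; simpl in Ht.
    rewrite Ropp_0, Rplus_0_r in Ht. exact Ht.
Qed.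

Lemma Cmod_opp' (z : C) : Cmod (Copp z) = Cmod z.
Proof. destruct z as [a b]. unfold Cmod; simpl. f_equal. ring. Qed.

Lemma cpow_S (z : C) n : cpow z (S n) = Cmult z (cpow z n).
Proof. reflexivity. Qed.

Lemma cpow_R (t : R) n : cpow (RtoC t) n = RtoC (t ^ n).
Proof.
  induction n. reflexivity.
  rewrite cpow_S, IHn. simpl. unfold Cmult, RtoC; simpl. f_equal; ring.
Qed.

Lemma cpow_opp (t : C) n : cpow (Copp t) n = Cmult (cpow (Copp (RtoC 1)) n) (cpow t n).
Proof.
  induction n. unfold cpow; simpl. change (@one C_Ring) with (RtoC 1). ring.
  rewrite !cpow_S, IHn. ring.
Qed.

Lemma cexp_add a b : cexp (Cplus a b) = Cmult (cexp a) (cexp b).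
Proof.
  destruct a as [a1 a2], b as [b1 b2]. unfold cexp, Cplus, Cmult; simpl.
  rewrite exp_plus, cos_plus, sin_plus. f_equal; ring.
Qed.

Lemma cexp_0 : cexp (RtoC 0) = RtoC 1.
Proof. unfold cexp, RtoC; simpl. rewrite exp_0, cos_0, sin_0. f_equal; ring. Qed.

Lemma cexp_eq1 z : cexp z = RtoC 1 -> Rabs (snd z) < 2 * PI -> z = RtoC 0.
Proof.
  destruct z as [a b]. unfold cexp, RtoC; simpl. intros H Hb.
  injection H as H1 H2.
  pose proof (exp_pos a) as Ea.
  assert (Hs : sin b = 0).
  { destruct (Rmult_integral _ _ H2); [lra | auto]. }
  destruct (sin_eq_0_0 b Hs) as [k Hk].
  assert (Hk2 : Rabs (IZR k) < 2).
  { rewrite Hk, Rabs_mult, (Rabs_pos_eq PI) in Hb by (pose proof PI_RGT_0; lra).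
    pose proof PI_RGT_0. nra. }
  apply Rabs_def2 in Hk2. destruct Hk2 as [Hk2a Hk2b].
  assert ((-2 < k)%Z) by (apply lt_IZR; simpl; lra).
  assert ((k < 2)%Z) by (apply lt_IZR; simpl; lra).
  assert (k = (-1)%Z \/ k = 0%Z \/ k = 1%Z) as [-> | [-> | ->]] by lia.
  - exfalso. rewrite Hk in H1. replace (IZR (-1) * PI) with (- PI) in H1 by (simpl; ring).
    rewrite cos_neg, cos_PI in H1. lra.
  - rewrite Hk in H1 |- *. replace (IZR 0 * PI) with 0 in * by (simpl; ring).
    rewrite cos_0, Rmult_1_r in H1. rewrite <- exp_0 in H1. apply exp_inv in H1.
    rewrite H1. reflexivity.
  - exfalso. rewrite Hk in H1. replace (IZR 1 * PI) with PI in H1 by (simpl; ring).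
    rewrite cos_PI in H1. lra.
Qed.

Lemma series_fst (u : nat -> C) (l : C) :
  @is_series C_AbsRing C_NormedModule u l -> is_series (fun n => fst (u n)) (fst l).
Proof.
  unfold is_series. intros H.
  assert (E : forall N, sum_n (fun n => fst (u n)) N = fst (sum_n u N)).
  { induction N. rewrite !sum_O. reflexivity.
    rewrite !sum_Sn, IHN. reflexivity. }
  apply (filterlim_ext (fun N => fst (sum_n u N))). intros; symmetry; apply E.
  eapply filterlim_comp. exact H.
  apply filterlim_locally. intros eps. exists eps. intros z [H1 H2]. exact H1.
Qed.

Lemma series_snd (u : nat -> C) (l : C) :
  @is_series C_AbsRing C_NormedModule u l -> is_series (fun n => snd (u n)) (snd l).
Proof.
  unfold is_series. intros H.
  assert (E : forall N, sum_n (fun n => snd (u n)) N = snd (sum_n u N)).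
  { induction N. rewrite !sum_O. reflexivity.
    rewrite !sum_Sn, IHN. reflexivity. }
  apply (filterlim_ext (fun N => snd (sum_n u N))). intros; symmetry; apply E.
  eapply filterlim_comp. exact H.
  apply filterlim_locally. intros eps. exists eps. intros z [H1 H2]. exact H2.
Qed.

Lemma series_uniq (u : nat -> C) (l1 l2 : C) :
  @is_series C_AbsRing C_NormedModule u l1 -> @is_series C_AbsRing C_NormedModule u l2 -> l1 = l2.
Proof.
  intros H1 H2. unfold is_series in *.
  exact (filterlim_locally_unique _ _ _ H1 H2).
Qed.

Lemma cont_ball (h : C -> C) : (exists l, has_cderiv h (RtoC 0) l) ->
  forall eps : posreal, exists d, 0 < d /\ forall z, Cmod z < d ->
    Rabs (fst (h z) - fst (h (RtoC 0))) < eps /\ Rabs (snd (h z) - snd (h (RtoC 0))) < eps.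
Proof.
  intros Hd eps.
  pose proof (@ex_derive_continuous C_AbsRing C_NormedModule h (RtoC 0) Hd) as Hc.
  unfold continuous in Hc.
  destruct (proj1 (@filterlim_locally _ C_UniformSpace _ _ h (h (RtoC 0))) Hc eps) as [d Hd']. exists d. split. apply cond_pos.
  intros z Hz.
  assert (Hb : @ball (AbsRing_UniformSpace C_AbsRing) (RtoC 0) d z).
  { unfold ball; simpl. unfold AbsRing_ball, abs, minus, plus, opp; simpl.
    replace (Cplus z (Copp (RtoC 0))) with z by ring. exact Hz. }
  specialize (Hd' z Hb). destruct Hd' as [H1 H2]. split; [exact H1 | exact H2].
Qed.

Theorem mainTheorem2 (g : C -> C) (phi : nat -> C) (f : C -> C) (P : nat -> C -> C) :
  holomorphic_at0 g -> g (RtoC 0) = RtoC 0 ->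
  (exists l : C, has_cderiv g (RtoC 0) l /\ l <> RtoC 0) ->
  (forall n, phi n <> RtoC 0) ->
  appell_gen g phi f P ->
  ((forall (n : nat) (x : C), P n (Copp x) = Cmult (cpow (Copp (RtoC 1)) n) (P n x))
   <-> (odd_near0 g /\ even_near0 f)).
Proof.
  intros Hg Hg0 Hg' Hphi [Hfh [Hf0 [_ Hser]]].
  assert (Hprod : forall n, phiprod phi n <> RtoC 0).
  { induction n; simpl. apply Hphi. apply Cmult_neq_0; auto. }
  split.
  - intro HP.
    assert (K : forall x, exists r, 0 < r /\ forall t, Cmod t < r ->
       Cmult (f (Copp t)) (cexp (Cmult x (g (Copp t)))) = Cmult (f t) (cexp (Cmult (Copp x) (g t)))).
    { intro x. destruct (Hser x) as [r1 [Hr1 S1]]. destruct (Hser (Copp x)) as [r2 [Hr2 S2]].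
      exists (Rmin r1 r2). split. apply Rmin_pos; auto.
      intros t Ht. apply (series_uniq (fun n => Cdiv (Cmult (P n (Copp x)) (cpow t n)) (phiprod phi n))).
      - apply (@is_series_ext C_AbsRing C_NormedModule (fun n => Cdiv (Cmult (P n x) (cpow (Copp t) n)) (phiprod phi n))).
        + intros n; cbv beta. rewrite HP, cpow_opp. match goal with |- ?a = ?b => change (@eq C a b) end. field. apply Hprod.
        + apply S1. rewrite Cmod_opp'. eapply Rlt_le_trans; [exact Ht| apply Rmin_l].
      - apply S2. eapply Rlt_le_trans; [exact Ht| apply Rmin_r]. }
    destruct (K (RtoC 0)) as [r0 [Hr0 K0]].
    assert (Hev : forall t, Cmod t < r0 -> f (Copp t) = f t).
    { intros t Ht. specialize (K0 t Ht).
      replace (Cmult (RtoC 0) (g (Copp t))) with (RtoC 0) in K0 by ring.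
      replace (Cmult (Copp (RtoC 0)) (g t)) with (RtoC 0) in K0 by ring.
      rewrite cexp_0 in K0. replace (f (Copp t)) with (Cmult (f (Copp t)) (RtoC 1)) by ring.
      rewrite K0. ring. }
    split; [| exists r0; split; auto].
    destruct (K (RtoC 1)) as [r1 [Hr1 K1]].
    assert (Hfnz : exists d, 0 < d /\ forall z, Cmod z < d -> f z <> RtoC 0).
    { destruct Hfh as [rf [Hrf Hfd]]. destruct (Hfd (RtoC 0)) as [lf Hlf].
      { rewrite Cmod_0; auto. }
      pose proof (cont_ball f (ex_intro _ lf Hlf)) as CB.
      destruct (f (RtoC 0)) as [a b] eqn:Ef.
      destruct (Req_dec a 0) as [Ha|Ha].
      - assert (Hb : b <> 0). { intro; apply Hf0; subst; reflexivity. }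
        destruct (CB (mkposreal _ (Rabs_pos_lt _ Hb))) as [d [Hd Hd']].
        exists d; split; auto. intros z Hz Hfz. destruct (Hd' z Hz) as [_ H2].
        rewrite Hfz in H2. simpl in H2. rewrite Rminus_0_l, Rabs_Ropp in H2. lra.
      - destruct (CB (mkposreal _ (Rabs_pos_lt _ Ha))) as [d [Hd Hd']].
        exists d; split; auto. intros z Hz Hfz. destruct (Hd' z Hz) as [H1 _].
        rewrite Hfz in H1. simpl in H1. rewrite Rminus_0_l, Rabs_Ropp in H1. lra. }
    destruct Hfnz as [df [Hdf Hfnz]].
    destruct Hg' as [lg [Hlg _]].
    destruct (cont_ball g (ex_intro _ lg Hlg) (mkposreal 1 Rlt_0_1)) as [dg [Hdg Hgb]].
    rewrite Hg0 in Hgb. simpl in Hgb.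
    exists (Rmin (Rmin r0 r1) (Rmin df dg)). split.
    { apply Rmin_pos; apply Rmin_pos; auto. }
    intros z Hz.
    assert (Hz0 : Cmod z < r0) by (eapply Rlt_le_trans; [exact Hz|]; eapply Rle_trans; [apply Rmin_l|apply Rmin_l]).
    assert (Hz1 : Cmod z < r1) by (eapply Rlt_le_trans; [exact Hz|]; eapply Rle_trans; [apply Rmin_l|apply Rmin_r]).
    assert (Hzf : Cmod z < df) by (eapply Rlt_le_trans; [exact Hz|]; eapply Rle_trans; [apply Rmin_r|apply Rmin_l]).
    assert (Hzg : Cmod z < dg) by (eapply Rlt_le_trans; [exact Hz|]; eapply Rle_trans; [apply Rmin_r|apply Rmin_r]).
    specialize (K1 z Hz1). rewrite (Hev z Hz0) in K1.
    replace (Cmult (RtoC 1) (g (Copp z))) with (g (Copp z)) in K1 by ring.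
    replace (Cmult (Copp (RtoC 1)) (g z)) with (Copp (g z)) in K1 by ring.
    assert (E1 : cexp (g (Copp z)) = cexp (Copp (g z))).
    { pose proof (Hfnz z Hzf) as Hnz.
      replace (cexp (g (Copp z))) with (Cmult (Cinv (f z)) (Cmult (f z) (cexp (g (Copp z))))) by (field; auto).
      rewrite K1. field; auto. }
    assert (E2 : cexp (Cplus (g (Copp z)) (g z)) = RtoC 1).
    { rewrite cexp_add, E1, <- cexp_add.
      replace (Cplus (Copp (g z)) (g z)) with (RtoC 0) by ring. apply cexp_0. }
    apply cexp_eq1 in E2.
    + replace (g (Copp z)) with (Cplus (Cplus (g (Copp z)) (g z)) (Copp (g z))) by ring.
      rewrite E2. ring.
    + destruct (Hgb z Hzg) as [_ Ha]. destruct (Hgb (Copp z) ltac:(rewrite Cmod_opp'; exact Hzg)) as [_ Hb].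
      rewrite Rminus_0_r in Ha, Hb. simpl.
      pose proof PI2_3_2. pose proof (Rabs_triang (snd (g (Copp z))) (snd (g z))). lra.
  - intros [[rg [Hrg Hodd]] [rf [Hrf Hev]]] n x.
    destruct (Hser x) as [r1 [Hr1 S1]]. destruct (Hser (Copp x)) as [r2 [Hr2 S2]].
    set (c := fun k => Cminus (Cdiv (P k (Copp x)) (phiprod phi k)) (Cmult (cpow (Copp (RtoC 1)) k) (Cdiv (P k x) (phiprod phi k)))).
    set (R0 := Rmin (Rmin r1 r2) (Rmin rf rg)).
    assert (HR0: 0 < R0) by (apply Rmin_pos; apply Rmin_pos; auto).
    assert (Hc : forall t, Rabs t < R0 -> @is_series C_AbsRing C_NormedModule (fun k => Cmult (c k) (RtoC (t ^ k))) (RtoC 0)).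
    { intros t Ht. rewrite <- Cmod_R in Ht.
      assert (Ht1 : Cmod (RtoC t) < r1) by (eapply Rlt_le_trans; [exact Ht|]; eapply Rle_trans; [apply Rmin_l|apply Rmin_l]).
      assert (Ht2 : Cmod (RtoC t) < r2) by (eapply Rlt_le_trans; [exact Ht|]; eapply Rle_trans; [apply Rmin_l|apply Rmin_r]).
      assert (Htf : Cmod (RtoC t) < rf) by (eapply Rlt_le_trans; [exact Ht|]; eapply Rle_trans; [apply Rmin_r|apply Rmin_l]).
      assert (Htg : Cmod (RtoC t) < rg) by (eapply Rlt_le_trans; [exact Ht|]; eapply Rle_trans; [apply Rmin_r|apply Rmin_r]).
      pose proof (S2 (RtoC t) Ht2) as A1.
      pose proof (S1 (Copp (RtoC t)) ltac:(rewrite Cmod_opp'; exact Ht1)) as A2.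
      rewrite (Hev _ Htf), (Hodd _ Htg) in A2.
      pose proof (is_series_minus _ _ _ _ A1 A2) as A3.
      replace (Cmult x (Copp (g (RtoC t)))) with (Cmult (Copp x) (g (RtoC t))) in A3 by ring.
      assert (Hz : forall w : C, @plus C_AbelianGroup w (@opp C_AbelianGroup w) = RtoC 0) by (intro w; change (@eq C (Cminus w w) (RtoC 0)); ring). rewrite Hz in A3.
      eapply (@is_series_ext C_AbsRing C_NormedModule); [| exact A3].
      intros k. simpl.
      match goal with |- plus ?a (opp ?b) = _ => change (Cminus a b = Cmult (c k) (RtoC (t^k))) end.
      unfold c. rewrite cpow_opp, cpow_R. field. apply Hprod. }
    assert (Hfst : forall k, fst (c k) = 0).
    { apply (ps_zero _ R0 HR0). intros t Ht. specialize (Hc t Ht). apply series_fst in Hc.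
      eapply is_series_ext; [|exact Hc]. intros k. simpl. ring. }
    assert (Hsnd : forall k, snd (c k) = 0).
    { apply (ps_zero _ R0 HR0). intros t Ht. specialize (Hc t Ht). apply series_snd in Hc.
      eapply is_series_ext; [|exact Hc]. intros k. simpl. ring. }
    assert (Hcn : c n = RtoC 0).
    { rewrite (surjective_pairing (c n)), Hfst, Hsnd. reflexivity. }
    transitivity (Cplus (Cmult (phiprod phi n) (c n)) (Cmult (cpow (Copp (RtoC 1)) n) (P n x))).
    + unfold c. field. apply Hprod.
    + rewrite Hcn. ring.
Qed.
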